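(* Let $R(H)$ be the number of integer solutions $(x,a,b,c,d)\in[-2H,2H]\times[-H,H]^4$ to the equation \[ x^3-bx^2+(ac-4d)x-(a^2d-4bd+c^2)=0. \] Then $R(H)\ll H^2(\log H)^2$ as $H\to\infty$. *)

(* Defs.v *)
From Stdlib Require Import ZArith List Reals.
Import ListNotations.
Open Scope Z_scope.

Definition zrange (h : Z) : list Z :=
  map (fun k : nat => Z.of_nat k - h) (seq 0 (Z.to_nat (2 * h + 1))).

Definition sol_eqn (x a b c d : Z) : bool :=
  Z.eqb (x^3 - b*x^2 + (a*c - 4*d)*x - (a^2*d - 4*b*d + c^2)) 0.

Definition R_count (H : nat) : nat :=
  let h := Z.of_nat H in
  list_sum (map (fun x =>
  list_sum (map (fun a =>
  list_sum (map (fun b =>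
  list_sum (map (fun c =>
  list_sum (map (fun d => Nat.b2n (sol_eqn x a b c d))
    (zrange h))) (zrange h))) (zrange h))) (zrange h))) (zrange (2 * h))).

(* Main.v *)
Require Import Defs.
From Stdlib Require Import ZArith List Reals.
From Stdlib Require Import Lia Lra Psatz Znumtheory ClassicalEpsilon Bool.
Import ListNotations.

Section Part1.

Definition cnt {A} (p : A -> bool) (l : list A) : nat := length (filter p l).

Lemma cnt_app {A} p (l1 l2 : list A) : cnt p (l1 ++ l2) = (cnt p l1 + cnt p l2)%nat.
Proof. unfold cnt. rewrite filter_app, length_app. reflexivity. Qed.

Lemma cnt_flat_map {A B} (p : B -> bool) (f : A -> list B) l :
  cnt p (flat_map f l) = list_sum (map (fun x => cnt p (f x)) l).
Proof. induction l; simpl; auto. rewrite cnt_app, IHl. reflexivity. Qed.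

Lemma cnt_map {A B} (p : B -> bool) (f : A -> B) l :
  cnt p (map f l) = list_sum (map (fun x => Nat.b2n (p (f x))) l).
Proof. induction l; simpl; auto. unfold cnt in *; simpl. destruct (p (f a)); simpl; lia. Qed.

Lemma cnt_le_length {A} (p : A -> bool) l : (cnt p l <= length l)%nat.
Proof. unfold cnt. induction l; simpl; auto. destruct (p a); simpl; lia. Qed.

Lemma cnt_inj {A B} (p : A -> bool) (q : B -> bool) (l1 : list A) (l2 : list B)
  (Rel : A -> B -> Prop) :
  NoDup l1 ->
  (forall x, In x l1 -> p x = true -> exists y, In y l2 /\ q y = true /\ Rel x y) ->
  (forall x x' y, In x l1 -> In x' l1 -> p x = true -> p x' = true ->
     Rel x y -> Rel x' y -> x = x') ->
  (cnt p l1 <= cnt q l2)%nat.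
Proof.
  intros Hnd Hex Hun. unfold cnt.
  destruct (filter p l1) as [|x0 r] eqn:E.
  - simpl; lia.
  - assert (Hx0 : In x0 (filter p l1)) by (rewrite E; left; auto).
    apply filter_In in Hx0. destruct Hx0 as [Hx0 Hp0].
    destruct (Hex x0 Hx0 Hp0) as [y0 _].
    set (f := fun x => epsilon (inhabits y0) (fun y => In y l2 /\ q y = true /\ Rel x y)).
    assert (Hf : forall x, In x (filter p l1) -> In (f x) l2 /\ q (f x) = true /\ Rel x (f x)).
    { intros x Hx. apply filter_In in Hx. destruct Hx as [Hx Hp].
      unfold f. apply epsilon_spec. apply Hex; auto. }
    rewrite <- E. rewrite <- (length_map f).
    apply NoDup_incl_length.
    + apply NoDup_map_NoDup_ForallPairs.
      * intros a b Ha Hb Hab.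
        destruct (Hf a Ha) as [_ [_ Ra]]. destruct (Hf b Hb) as [_ [_ Rb]].
        apply filter_In in Ha; apply filter_In in Hb.
        rewrite Hab in Ra. eapply Hun; eauto; tauto.
      * apply NoDup_filter; auto.
    + intros z Hz. apply in_map_iff in Hz. destruct Hz as [x [<- Hx]].
      destruct (Hf x Hx) as [H1 [H2 _]]. apply filter_In; auto.
Qed.

Lemma in_zrange h z : (0 <= h)%Z -> In z (zrange h) <-> (-h <= z <= h)%Z.
Proof.
  intros Hh. unfold zrange. rewrite in_map_iff. split.
  - intros [k [<- Hk]]. apply in_seq in Hk. lia.
  - intros Hz. exists (Z.to_nat (z + h)). split; [lia|]. apply in_seq. lia.
Qed.

Lemma nodup_zrange h : NoDup (zrange h).
Proof.
  unfold zrange. apply NoDup_map_NoDup_ForallPairs; [|apply seq_NoDup].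
  intros a b _ _ E. lia.
Qed.

Lemma length_zrange h : length (zrange h) = Z.to_nat (2 * h + 1).
Proof. unfold zrange. rewrite length_map, length_seq. auto. Qed.

Lemma nodup_prod {A B} (l1 : list A) (l2 : list B) :
  NoDup l1 -> NoDup l2 -> NoDup (list_prod l1 l2).
Proof.
  intros H1 H2. induction H1 as [|x l1 Hx H1 IH]; simpl; [constructor|].
  apply NoDup_app; auto.
  - apply NoDup_map_NoDup_ForallPairs; auto. intros a b _ _ E. inversion E; auto.
  - intros z Hz Hz'. apply in_map_iff in Hz. destruct Hz as [y [<- Hy]].
    apply in_prod_iff in Hz'. tauto.
Qed.

End Part1.

Section Part2.

Lemma cnt_sum {A} (p : A -> bool) l : cnt p l = list_sum (map (fun z => Nat.b2n (p z)) l).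
Proof. unfold cnt. induction l; simpl; auto. destruct (p a); simpl; lia. Qed.

Lemma sum_prod {A B} (F : A * B -> nat) l1 l2 :
  list_sum (map F (list_prod l1 l2)) =
  list_sum (map (fun x => list_sum (map (fun y => F (x, y)) l2)) l1).
Proof.
  induction l1; simpl; auto. rewrite map_app, list_sum_app, IHl1, map_map. auto.
Qed.

Definition p5 (t : Z * Z * Z * Z * Z) : bool :=
  let '(x, a, b, c, d) := t in sol_eqn x a b c d.

Definition L5 (h : Z) :=
  list_prod (list_prod (list_prod (list_prod (zrange (2 * h)) (zrange h)) (zrange h)) (zrange h)) (zrange h).

Lemma R_count_cnt H : R_count H = cnt p5 (L5 (Z.of_nat H)).
Proof.
  rewrite cnt_sum. unfold L5, R_count.
  rewrite !sum_prod. simpl.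
  reflexivity.
Qed.

End Part2.

Section Part3.
Local Open Scope Z_scope.

Lemma sol_iff x a b c d : sol_eqn x a b c d = true ->
  (a*x - 2*c)^2 = (a^2 + 4*x - 4*b) * (x^2 - 4*d).
Proof.
  unfold sol_eqn. rewrite Z.eqb_eq. intro E.
  assert (Hid : (a*x - 2*c)^2 - (a^2 + 4*x - 4*b) * (x^2 - 4*d) =
     -4 * (x ^ 3 - b * x ^ 2 + (a * c - 4 * d) * x - (a ^ 2 * d - 4 * b * d + c ^ 2))) by ring.
  rewrite E in Hid. lia.
Qed.

Lemma decomp m n k : m*n = k^2 -> (m <> 0 \/ n <> 0) ->
  exists e s g u v, (e = 1 \/ e = -1) /\ (s = 1 \/ s = -1) /\ 1 <= g /\ 0 <= u /\ 0 <= v /\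
    m = e*g*u^2 /\ n = e*g*v^2 /\ k = s*g*u*v.
Proof.
  intros Hmn Hnz.
  destruct (Z.eq_dec m 0) as [Hm0|Hm0].
  - subst m. assert (k = 0) by nia. subst k.
    exists (Z.sgn n), 1, (Z.abs n), 0, 1.
    assert (n <> 0) by tauto.
    repeat split; try lia.
    all: try (destruct (Z.sgn_spec n) as [[? ->]|[[? ->]|[? ->]]]; lia).
    all: try (rewrite <- (Z.abs_sgn n) at 1; ring).
  - set (e := Z.sgn m). set (M := Z.abs m). set (N := e * n).
    assert (He : e = 1 \/ e = -1) by (unfold e; destruct (Z.sgn_spec m) as [[? ->]|[[? ->]|[? ->]]]; lia).
    assert (HmM : m = e * M) by (unfold e, M; rewrite Z.mul_comm, Z.abs_sgn; auto).
    assert (HnN : n = e * N) by (unfold N; destruct He as [-> | ->]; ring).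
    assert (HM : 0 < M) by (unfold M; lia).
    assert (HMN : M * N = k^2) by (rewrite <- Hmn, HmM, HnN; destruct He as [-> | ->]; ring).
    assert (HN : 0 <= N) by nia.
    set (G := Z.gcd M k).
    assert (HG : 0 < G). { unfold G. assert (0 <= Z.gcd M k) by apply Z.gcd_nonneg.
      assert (Z.gcd M k <> 0). { intro E. apply Z.gcd_eq_0_l in E. lia. } lia. }
    set (m1 := M / G). set (k1 := k / G).
    assert (Hcop : Z.gcd m1 k1 = 1) by (apply Z.gcd_div_gcd; [lia|auto]).
    assert (HM1 : M = G * m1).
    { unfold m1. apply Z.div_exact; [lia|]. apply Z.mod_divide; [lia|]. apply Z.gcd_divide_l. }
    assert (HK1 : k = G * k1).
    { unfold k1. apply Z.div_exact; [lia|]. apply Z.mod_divide; [lia|]. apply Z.gcd_divide_r. }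
    assert (Hm1 : 0 < m1) by nia.
    assert (E1 : m1 * N = G * k1^2).
    { apply (Z.mul_reg_l _ _ G); [lia|]. rewrite Z.mul_assoc, <- HM1, HMN, HK1. ring. }
    assert (Hdiv : (m1 | G)).
    { apply (Z.gauss _ (k1^2)).
      - exists N. rewrite Z.mul_comm, <- E1. ring.
      - apply Zgcd_1_rel_prime in Hcop. apply Zgcd_1_rel_prime.
        rewrite Z.pow_2_r. apply rel_prime_mult; auto. }
    destruct Hdiv as [f Hf].
    assert (Hfpos : 0 < f) by nia.
    assert (HNf : N = f * k1^2).
    { apply (Z.mul_reg_l _ _ m1); [lia|]. rewrite E1, Hf. ring. }
    exists e, (if Z.ltb k1 0 then -1 else 1), f, m1, (Z.abs k1).
    repeat split; try lia.
    + destruct (k1 <? 0); auto.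
    + rewrite HK1, Hf. destruct (Z.ltb_spec k1 0);
        [rewrite Z.abs_neq by lia | rewrite Z.abs_eq by lia]; ring.
Qed.

End Part3.

Section Part4.
Local Open Scope Z_scope.

Definition range1 (N : Z) := map Z.of_nat (seq 1 (Z.to_nat N)).
Definition range0 (N : Z) := map Z.of_nat (seq 0 (Z.to_nat N + 1)).

Lemma in_range1 N z : In z (range1 N) <-> 1 <= z <= N.
Proof.
  unfold range1. rewrite in_map_iff. split.
  - intros [k [<- Hk]]. apply in_seq in Hk. lia.
  - intros Hz. exists (Z.to_nat z). split; [lia|]. apply in_seq. lia.
Qed.

Lemma in_range0 N z : 0 <= N -> (In z (range0 N) <-> 0 <= z <= N).
Proof.
  intro HN. unfold range0. rewrite in_map_iff. split.
  - intros [k [<- Hk]]. apply in_seq in Hk. lia.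
  - intros Hz. exists (Z.to_nat z). split; [lia|]. apply in_seq. lia.
Qed.

Definition T8 : Type := Z * Z * Z * Z * Z * Z * Z * Z.

Definition L8 (h : Z) : list T8 :=
  flat_map (fun g => flat_map (fun r => flat_map (fun e => flat_map (fun s =>
  flat_map (fun cs => flat_map (fun o => flat_map (fun w =>
    map (fun t => (g,r,e,s,cs,o,w,t)) (zrange (8*h)))
    (zrange (2*h))) (range0 r)) [0;1]) [1;-1]) [1;-1]) (range1 (4*h))) (range1 (16*h*h)).

Definition rho (e s cs o w : Z) : Z := if Z.eqb cs 0 then e*o*w else -(s*o*w).

Definition Q8 (h : Z) (tp : T8) : bool :=
  let '(g,r,e,s,cs,o,w,t) := tp in
  Z.leb (Z.abs (w^2 - e*g*r^2)) (12*h) && Z.leb (g*t^2) (52*h*h)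
  && Z.eqb ((t + rho e s cs o w) mod r) 0.

Definition mm (x a b : Z) := a^2 + 4*x - 4*b.
Definition nn (x d : Z) := x^2 - 4*d.
Definition kk (x a c : Z) := a*x - 2*c.

Definition pM (tp : Z*Z*Z*Z*Z) : bool :=
  let '(x,a,b,c,d) := tp in
  sol_eqn x a b c d && negb (Z.eqb (mm x a b) 0 && Z.eqb (nn x d) 0).

Definition Rel (src : Z*Z*Z*Z*Z) (tp : T8) : Prop :=
  let '(x,a,b,c,d) := src in
  let '(g,r,e,s,cs,o,w,t) := tp in
  exists u v, (e = 1 \/ e = -1) /\ (s = 1 \/ s = -1) /\ 1 <= g /\ 0 <= u /\ 0 <= v /\
    mm x a b = e*g*u^2 /\ nn x d = e*g*v^2 /\ kk x a c = s*g*u*v /\ 1 <= r /\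
    ((cs = 0 /\ r = u /\ o = v /\ w = a) \/ (cs = 1 /\ r = v /\ o = u /\ w = x)) /\
    t = s*u*x - e*v*a.

Lemma Rel_unique x1 x2 y : Rel x1 y -> Rel x2 y -> x1 = x2.
Proof.
  destruct x1 as [[[[x a] b] c] d]. destruct x2 as [[[[x' a'] b'] c'] d'].
  destruct y as [[[[[[[g r] e] s] cs] o] w] t].
  simpl. unfold mm, nn, kk.
  intros [u [v [He [Hs [Hg [Hu [Hv [Hm [Hn [Hk [Hr [Hc Ht]]]]]]]]]]]].
  intros [u' [v' [He' [Hs' [Hg' [Hu' [Hv' [Hm' [Hn' [Hk' [Hr' [Hc' Ht']]]]]]]]]]]].
  destruct Hc as [[Hc0 [-> [-> ->]]]|[Hc0 [-> [-> ->]]]];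
  destruct Hc' as [[Hc0' [? [? ?]]]|[Hc0' [? [? ?]]]]; subst; try discriminate.
  - assert (Hx : s*u'*(x - x') = 0) by (rewrite Z.mul_sub_distr_l; lia).
    apply Z.mul_eq_0 in Hx as [Hx|Hx]; [apply Z.mul_eq_0 in Hx as [Hx|Hx]; lia|].
    assert (x = x') by lia. subst x'. repeat f_equal; lia.
  - assert (Hx : e*v'*(a - a') = 0) by (rewrite Z.mul_sub_distr_l; lia).
    apply Z.mul_eq_0 in Hx as [Hx|Hx]; [apply Z.mul_eq_0 in Hx as [Hx|Hx]; lia|].
    assert (a = a') by lia. subst a'. repeat f_equal; lia.
Qed.

End Part4.

Section Part5.
Local Open Scope Z_scope.

Lemma key_id x a b c d e s g u v : (e = 1 \/ e = -1) -> (s = 1 \/ s = -1) ->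
  mm x a b = e*g*u^2 -> nn x d = e*g*v^2 -> kk x a c = s*g*u*v ->
  g*(s*u*x - e*v*a)^2 = e*(4*c^2 + 16*d*(x - b)).
Proof.
  unfold mm, nn, kk. intros He Hs Hm Hn Hk.
  assert (H4c : 2*c = a*x - s*g*u*v) by lia.
  assert (H4d : 4*d = x^2 - e*g*v^2) by lia.
  assert (H4xb : 4*(x-b) = e*g*u^2 - a^2) by lia.
  replace (4*c^2 + 16*d*(x-b)) with ((2*c)^2 + (4*d)*(4*(x-b))) by ring.
  rewrite H4c, H4d, H4xb.
  destruct He as [-> | ->]; destruct Hs as [-> | ->]; ring.
Qed.

Lemma in_L8 h g r e s cs o w t : 0 <= h ->
  1 <= g <= 16*h*h -> 1 <= r <= 4*h -> (e = 1 \/ e = -1) -> (s = 1 \/ s = -1) ->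
  (cs = 0 \/ cs = 1) -> 0 <= o <= r -> -(2*h) <= w <= 2*h -> -(8*h) <= t <= 8*h ->
  In (g,r,e,s,cs,o,w,t) (L8 h).
Proof.
  intros Hh Hg Hr He Hs Hcs Ho Hw Ht. unfold L8.
  apply in_flat_map. exists g. split; [apply in_range1; lia|].
  apply in_flat_map. exists r. split; [apply in_range1; lia|].
  apply in_flat_map. exists e. split; [simpl; lia|].
  apply in_flat_map. exists s. split; [simpl; lia|].
  apply in_flat_map. exists cs. split; [simpl; lia|].
  apply in_flat_map. exists o. split; [apply in_range0; lia|].
  apply in_flat_map. exists w. split; [apply in_zrange; lia|].
  apply in_map_iff. exists t. split; [auto|apply in_zrange; lia].
Qed.

Lemma in_L5 h x a b c d : 0 <= h -> In (x,a,b,c,d) (L5 h) ->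
  -(2*h) <= x <= 2*h /\ -h <= a <= h /\ -h <= b <= h /\ -h <= c <= h /\ -h <= d <= h.
Proof.
  intros Hh H. unfold L5 in H. rewrite !in_prod_iff, !in_zrange in H by lia. lia.
Qed.

Lemma sq_le' w B : -B <= w <= B -> w^2 <= B*B.
Proof.
  intro H. rewrite Z.pow_2_r, <- Z.abs_square.
  apply Z.mul_le_mono_nonneg; lia.
Qed.

Lemma sq_ge_bound t B : 0 <= B -> t*t <= B*B -> -B <= t <= B.
Proof.
  intros HB H. rewrite <- Z.abs_square in H.
  assert (Z.abs t <= B).
  { destruct (Z.le_gt_cases (Z.abs t) B); auto.
    assert (B*B < Z.abs t * Z.abs t) by (apply Z.mul_lt_mono_nonneg; lia). lia. }
  lia.
Qed.

Lemma le_mul_sq g u : 1 <= g -> 1 <= u -> g <= g*u^2 /\ u*u <= g*u^2.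
Proof.
  intros Hg Hu. rewrite Z.pow_2_r. split.
  - assert (1 <= u*u) by (apply (Z.mul_le_mono_nonneg 1 u 1 u); lia).
    assert (g*1 <= g*(u*u)) by (apply Z.mul_le_mono_nonneg_l; lia). lia.
  - assert (1*(u*u) <= g*(u*u)) by (apply Z.mul_le_mono_nonneg_r; [apply Z.square_nonneg|lia]). lia.
Qed.

Lemma main_exist h src : 1 <= h -> In src (L5 h) -> pM src = true ->
  exists y, In y (L8 h) /\ Q8 h y = true /\ Rel src y.
Proof.
  intros Hh Hin Hp. destruct src as [[[[x a] b] c] d].
  apply in_L5 in Hin; [|lia]. destruct Hin as [Hx [Ha [Hb [Hc Hd]]]].
  simpl in Hp. apply andb_true_iff in Hp. destruct Hp as [Hsol Hnz].
  apply sol_iff in Hsol.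
  assert (Hnz' : mm x a b <> 0 \/ nn x d <> 0).
  { destruct (Z.eqb_spec (mm x a b) 0); destruct (Z.eqb_spec (nn x d) 0); simpl in Hnz;
    try discriminate; tauto. }
  destruct (decomp (mm x a b) (nn x d) (kk x a c)) as [e [s [g [u [v H]]]]].
  { unfold mm, nn, kk. rewrite Hsol. ring. }
  { auto. }
  destruct H as [He [Hs [Hg [Hu [Hv [Hm [Hn Hk]]]]]]].
  clear Hsol Hnz.
  pose proof (key_id x a b c d e s g u v He Hs Hm Hn Hk) as Hid.
  set (t := s*u*x - e*v*a) in *.
  assert (Hhh : h <= h*h) by (rewrite <- (Z.mul_1_r h) at 1; apply Z.mul_le_mono_nonneg_l; lia).
  assert (Hgt : g*t^2 <= 52*h*h).
  { rewrite Hid.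
    assert (Hc2 : c^2 <= h*h) by (apply sq_le'; lia).
    assert (Hdb : Z.abs (d*(x-b)) <= h*(3*h)).
    { rewrite Z.abs_mul. apply Z.mul_le_mono_nonneg; lia. }
    clear -Hc2 Hdb He.
    assert (E1 : 16*d*(x-b) = 16*(d*(x-b))) by ring.
    assert (E2 : h*(3*h) = 3*(h*h)) by ring.
    assert (E3 : 52*h*h = 52*(h*h)) by ring.
    rewrite E1, E3. rewrite E2 in Hdb.
    destruct He as [-> | ->]; lia. }
  assert (Ht : -(8*h) <= t <= 8*h).
  { apply sq_ge_bound; [lia|].
    assert (t*t <= g*t^2).
    { rewrite Z.pow_2_r. assert (1*(t*t) <= g*(t*t)) by (apply Z.mul_le_mono_nonneg_r; [apply Z.square_nonneg|lia]). lia. }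
    lia. }
  destruct (Z.le_gt_cases v u) as [Hvu|Huv].
  - assert (Hu1 : 1 <= u).
    { destruct (Z.eq_dec u 0) as [E|E]; [|lia]. exfalso.
      assert (v = 0) by lia. subst u v.
      destruct Hnz' as [H|H]; apply H; [rewrite Hm|rewrite Hn]; ring. }
    assert (Hw : Z.abs (a^2 - e*g*u^2) <= 12*h) by (rewrite <- Hm; unfold mm; lia).
    assert (Hsz : g*u^2 <= 16*h*h).
    { assert (a^2 <= h*h) by (apply sq_le'; lia). destruct He as [-> | ->]; lia. }
    destruct (le_mul_sq g u Hg Hu1) as [Hg1 Hu2].
    assert (Hu4 : -(4*h) <= u <= 4*h) by (apply sq_ge_bound; lia).
    exists (g,u,e,s,0,v,a,t). split; [|split].
    + apply in_L8; lia.
    + unfold Q8; cbv beta iota. rewrite !andb_true_iff, !Z.leb_le, Z.eqb_eq. split; [split|]; [lia|lia|].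
      unfold rho; simpl. apply Z.mod_divide; [lia|]. exists (s*x). unfold t. ring.
    + simpl. exists u, v. repeat split; auto; try lia.
  - assert (Hw : Z.abs (x^2 - e*g*v^2) <= 12*h) by (rewrite <- Hn; unfold nn; lia).
    assert (Hsz : g*v^2 <= 16*h*h).
    { assert (x^2 <= (2*h)*(2*h)) by (apply sq_le'; lia). destruct He as [-> | ->]; lia. }
    destruct (le_mul_sq g v Hg ltac:(lia)) as [Hg1 Hv2].
    assert (Hv4 : -(4*h) <= v <= 4*h) by (apply sq_ge_bound; lia).
    exists (g,v,e,s,1,u,x,t). split; [|split].
    + apply in_L8; lia.
    + unfold Q8; cbv beta iota. rewrite !andb_true_iff, !Z.leb_le, Z.eqb_eq. split; [split|]; [lia|lia|].
      unfold rho; simpl. apply Z.mod_divide; [lia|]. exists (-(e*a)). unfold t. ring.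
    + simpl. exists u, v. repeat split; auto; try lia.
Qed.

End Part5.

Section Part6.
Local Open Scope Z_scope.

Lemma sqrt_div_ge A s0 q : 0 < s0 -> 0 <= q -> q*q*s0 <= A -> q <= Z.sqrt (A / s0).
Proof.
  intros Hs Hq H. apply Z.sqrt_le_square; [apply Z.div_pos; nia|lia|].
  apply Z.div_le_lower_bound; lia.
Qed.

Lemma sqrt_div_spec A s0 : 0 < s0 -> 0 <= A -> Z.sqrt (A / s0) * Z.sqrt (A / s0) * s0 <= A.
Proof.
  intros Hs HA. assert (H0 : 0 <= A / s0) by (apply Z.div_pos; lia).
  pose proof (Z.sqrt_spec _ H0) as [H1 _]. simpl in H1.
  pose proof (Z.mul_div_le A s0 Hs). nia.
Qed.

Lemma cnt_diam (p : Z -> bool) l r K : NoDup l -> 0 <= K ->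
  (forall x y, In x l -> In y l -> p x = true -> p y = true ->
     exists j, x - y = r*j /\ -K <= j <= K) ->
  (cnt p l <= Z.to_nat (2*K+1))%nat.
Proof.
  intros Hnd HK Hd. unfold cnt.
  destruct (filter p l) as [|x0 rr] eqn:E; [simpl; lia|].
  assert (Hx0 : In x0 (filter p l)) by (rewrite E; left; auto).
  apply filter_In in Hx0. destruct Hx0 as [Hx0 Hp0].
  rewrite <- E. replace (Z.to_nat (2*K+1)) with (length (map (fun j => x0 + r*j) (zrange K)))
    by (rewrite length_map, length_zrange; auto).
  apply NoDup_incl_length; [apply NoDup_filter; auto|].
  intros y Hy. apply filter_In in Hy. destruct Hy as [Hy Hpy].
  destruct (Hd y x0 Hy Hx0 Hpy Hp0) as [j [Hj1 Hj2]].
  apply in_map_iff. exists j. split; [lia|]. apply in_zrange; lia.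
Qed.

Lemma cnt_split {A} (p q : A -> bool) l :
  (cnt p l <= cnt (fun x => p x && q x) l + cnt (fun x => p x && negb (q x)) l)%nat.
Proof. unfold cnt. induction l; simpl; auto. destruct (p a), (q a); simpl; lia. Qed.

Lemma pair_W e s0 D w1 w2 : (e = 1 \/ e = -1) -> 1 <= s0 -> 0 <= D -> 0 <= w1 -> 0 <= w2 ->
  Z.abs (w1^2 - e*s0) <= D -> Z.abs (w2^2 - e*s0) <= D ->
  (w1 - w2) * (w1 - w2) * s0 <= 8*D*D.
Proof.
  intros He Hs HD H1 H2 Hw1 Hw2.
  assert (Hm : (w1-w2)*(w1-w2) <= w1*w1 \/ (w1-w2)*(w1-w2) <= w2*w2).
  { destruct (Z.le_ge_cases w1 w2); [right|left].
    - replace ((w1-w2)*(w1-w2)) with ((w2-w1)*(w2-w1)) by ring.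
      apply Z.mul_le_mono_nonneg; lia.
    - apply Z.mul_le_mono_nonneg; lia. }
  rewrite !Z.pow_2_r in Hw1, Hw2.
  assert (HP0 : 0 <= (w1-w2)*(w1-w2)) by apply Z.square_nonneg.
  destruct He as [-> | ->].
  - destruct (Z.le_gt_cases (2*D) s0) as [Hbig|Hsmall].
    + assert (HS : s0 <= (w1+w2)*(w1+w2)).
      { assert (0 <= w1*w2) by (apply Z.mul_nonneg_nonneg; lia).
        replace ((w1+w2)*(w1+w2)) with (w1*w1 + w2*w2 + 2*(w1*w2)) by ring. lia. }
      assert (HP : (w1-w2)*(w1-w2)*((w1+w2)*(w1+w2)) <= 4*D*D).
      { assert (Hd : Z.abs (w1^2 - w2^2) <= 2*D) by lia.
        replace ((w1-w2)*(w1-w2)*((w1+w2)*(w1+w2))) with ((w1^2-w2^2)*(w1^2-w2^2)) by ring.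
        rewrite !Z.pow_2_r in *.
        assert (Hd2 : 0 <= Z.abs (w1*w1-w2*w2)) by lia.
        rewrite <- Z.abs_square. 
        assert (Z.abs (w1*w1-w2*w2) * Z.abs (w1*w1-w2*w2) <= (2*D)*(2*D)) by (apply Z.mul_le_mono_nonneg; lia).
        lia. }
      assert ((w1-w2)*(w1-w2)*s0 <= (w1-w2)*(w1-w2)*((w1+w2)*(w1+w2)))
        by (apply Z.mul_le_mono_nonneg_l; lia). lia.
    + assert (w1*w1 <= 3*D) by lia. assert (w2*w2 <= 3*D) by lia.
      assert (Hq : (w1-w2)*(w1-w2) <= 3*D) by lia.
      assert ((w1-w2)*(w1-w2)*s0 <= (3*D)*(2*D)) by (apply Z.mul_le_mono_nonneg; lia). lia.
  - assert (w1*w1 <= D) by lia. assert (w2*w2 <= D) by lia.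
    assert (s0 <= D) by lia.
    assert (Hq : (w1-w2)*(w1-w2) <= D) by lia.
    assert ((w1-w2)*(w1-w2)*s0 <= D*D) by (apply Z.mul_le_mono_nonneg; lia). lia.
Qed.

Lemma cnt_zero {A} (p : A -> bool) l : (forall x, In x l -> p x = false) -> cnt p l = 0%nat.
Proof.
  unfold cnt. induction l; simpl; auto. intro H. rewrite H by auto. apply IHl. auto.
Qed.

Lemma sq_le w B : -B <= w <= B -> w^2 <= B*B.
Proof.
  intro H. rewrite Z.pow_2_r, <- Z.abs_square.
  apply Z.mul_le_mono_nonneg; lia.
Qed.

Definition LW (h g r : Z) := Z.sqrt (1152*h*h / (g*r^2)).
Definition KT (h g r : Z) := Z.sqrt (208*h*h / (g*r^2)).
Definition BW (h g r : Z) := if Z.leb (g*r^2) (16*h*h) then 2*(2*LW h g r+1) else 0.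

Lemma cntW_bound h e g r : 1 <= h -> (e = 1 \/ e = -1) -> 1 <= g -> 1 <= r ->
  (cnt (fun w => Z.leb (Z.abs (w^2 - e*g*r^2)) (12*h)) (zrange (2*h)) <= Z.to_nat (BW h g r))%nat.
Proof.
  intros Hh He Hg Hr.
  assert (Hs : 1 <= g*r^2) by nia.
  assert (HeE : forall w, w^2 - e*g*r^2 = w^2 - e*(g*r^2)) by (intro; ring).
  unfold BW. destruct (Z.leb_spec (g*r^2) (16*h*h)) as [Hle|Hgt].
  - eapply Nat.le_trans; [apply (cnt_split _ (fun w => Z.leb 0 w))|].
    assert (HL : 0 <= LW h g r) by apply Z.sqrt_nonneg.
    assert (Hp : forall w1 w2, 0 <= w1 -> 0 <= w2 ->
      Z.abs (w1^2 - e*(g*r^2)) <= 12*h -> Z.abs (w2^2 - e*(g*r^2)) <= 12*h ->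
      exists j, w1 - w2 = 1*j /\ - LW h g r <= j <= LW h g r).
    { intros w1 w2 H1 H2 Hw1 Hw2. exists (w1 - w2). split; [ring|].
      pose proof (pair_W e (g*r^2) (12*h) w1 w2 He Hs ltac:(lia) H1 H2 Hw1 Hw2) as HP.
      assert (Z.abs (w1 - w2) <= LW h g r).
      { unfold LW. apply sqrt_div_ge; [lia|lia|].
        rewrite <- Z.abs_square in HP. nia. }
      lia. }
    assert (H1 : (cnt (fun w => Z.leb (Z.abs (w^2 - e*g*r^2)) (12*h) && Z.leb 0 w) (zrange (2*h))
                 <= Z.to_nat (2*LW h g r+1))%nat).
    { apply (cnt_diam _ _ 1); [apply nodup_zrange|auto|].
      intros x y _ _ Hx Hy. apply andb_true_iff in Hx, Hy.
      destruct Hx as [Hx1 Hx2]; destruct Hy as [Hy1 Hy2].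
      apply Z.leb_le in Hx1, Hx2, Hy1, Hy2. rewrite HeE in Hx1, Hy1. apply Hp; auto. }
    assert (H2 : (cnt (fun w => Z.leb (Z.abs (w^2 - e*g*r^2)) (12*h) && negb (Z.leb 0 w)) (zrange (2*h))
                 <= Z.to_nat (2*LW h g r+1))%nat).
    { apply (cnt_diam _ _ 1); [apply nodup_zrange|auto|].
      intros x y _ _ Hx Hy. apply andb_true_iff in Hx, Hy.
      destruct Hx as [Hx1 Hx2]; destruct Hy as [Hy1 Hy2].
      apply negb_true_iff, Z.leb_gt in Hx2, Hy2.
      apply Z.leb_le in Hx1, Hy1. rewrite HeE in Hx1, Hy1.
      destruct (Hp (-x) (-y)) as [j [Hj1 Hj2]]; try lia.
      exists (-j). split; lia. }
    lia.
  - rewrite cnt_zero; [lia|]. intros w Hw. apply in_zrange in Hw; [|lia].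
    apply Z.leb_gt. rewrite HeE.
    assert (w^2 <= (2*h)*(2*h)) by (apply sq_le; lia).
    assert (h <= h*h) by nia.
    destruct He as [-> | ->]; lia.
Qed.

Lemma cntT_bound h g r rh : 1 <= h -> 1 <= g -> 1 <= r ->
  (cnt (fun t => Z.leb (g*t^2) (52*h*h) && Z.eqb ((t + rh) mod r) 0) (zrange (8*h))
    <= Z.to_nat (2*KT h g r+1))%nat.
Proof.
  intros Hh Hg Hr.
  apply (cnt_diam _ _ r); [apply nodup_zrange|apply Z.sqrt_nonneg|].
  intros x y _ _ Hx Hy. apply andb_true_iff in Hx, Hy.
  destruct Hx as [Hx1 Hx2]; destruct Hy as [Hy1 Hy2].
  apply Z.leb_le in Hx1, Hy1. apply Z.eqb_eq in Hx2, Hy2.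
  apply Z.mod_divide in Hx2, Hy2; try lia.
  destruct Hx2 as [jx Hjx]. destruct Hy2 as [jy Hjy].
  exists (jx - jy). split; [lia|].
  assert (Hd : g*((x-y)*(x-y)) <= 208*h*h).
  { assert (0 <= (x+y)*(x+y)) by apply Z.square_nonneg.
    assert ((x-y)*(x-y) <= 2*x^2 + 2*y^2) by nia. nia. }
  assert (Hxy : x - y = r*(jx - jy)) by lia.
  rewrite Hxy in Hd.
  assert (Z.abs (jx - jy) <= KT h g r).
  { unfold KT. apply sqrt_div_ge; [nia|lia|].
    rewrite <- Z.abs_square. nia. }
  lia.
Qed.

End Part6.

Section Part7.
Local Open Scope Z_scope.

Lemma cnt_ext {A} (p q : A -> bool) l : (forall x, p x = q x) -> cnt p l = cnt q l.
Proof. intro H. unfold cnt. induction l; simpl; auto. rewrite H. destruct (q a); simpl; auto. Qed.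

Lemma cnt_map' {A B} (p : B -> bool) (f : A -> B) l : cnt p (map f l) = cnt (fun x => p (f x)) l.
Proof. unfold cnt. induction l; simpl; auto. destruct (p (f a)); simpl; auto. Qed.

Lemma list_sum_le {A} (f g : A -> nat) l : (forall x, In x l -> (f x <= g x)%nat) ->
  (list_sum (map f l) <= list_sum (map g l))%nat.
Proof. induction l; simpl; auto. intro H. pose proof (H a (or_introl eq_refl)).
  assert (list_sum (map f l) <= list_sum (map g l))%nat by (apply IHl; auto). lia. Qed.

Lemma list_sum_const {A} (f : A -> nat) c l : (forall x, In x l -> (f x <= c)%nat) ->
  (list_sum (map f l) <= length l * c)%nat.
Proof. induction l; simpl; auto. intro H. pose proof (H a (or_introl eq_refl)).
  assert (list_sum (map f l) <= length l * c)%nat by (apply IHl; auto). lia. Qed.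

Lemma sum_b2n {A} (p : A -> bool) c l :
  list_sum (map (fun x => (Nat.b2n (p x) * c)%nat) l) = (cnt p l * c)%nat.
Proof. unfold cnt. induction l; simpl; auto. rewrite IHl. destruct (p a); simpl; lia. Qed.

Definition Bnat (h g r : Z) : nat :=
  (8 * Z.to_nat (r+1) * Z.to_nat (BW h g r) * Z.to_nat (2*KT h g r + 1))%nat.

Lemma inner_bound h g r e s cs o : 1 <= h -> 1 <= g -> 1 <= r -> (e = 1 \/ e = -1) ->
  (cnt (Q8 h) (flat_map (fun w => map (fun t => (g,r,e,s,cs,o,w,t)) (zrange (8*h))) (zrange (2*h)))
   <= Z.to_nat (BW h g r) * Z.to_nat (2*KT h g r + 1))%nat.
Proof.
  intros Hh Hg Hr He.
  rewrite cnt_flat_map.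
  eapply Nat.le_trans.
  - apply (list_sum_le _ (fun w => Nat.mul (Nat.b2n (Z.leb (Z.abs (w^2 - e*g*r^2)%Z) (12*h)%Z))
                                  (Z.to_nat (2*KT h g r + 1)%Z))).
    intros w _. rewrite cnt_map'. unfold Q8.
    destruct (Z.leb (Z.abs (w^2 - e*g*r^2)) (12*h)); simpl.
    + rewrite Nat.add_0_r.
      eapply Nat.le_trans; [|apply (cntT_bound h g r (rho e s cs o w)); auto].
      apply Nat.eq_le_incl. apply cnt_ext. intro t. reflexivity.
    + rewrite cnt_zero; auto.
  - rewrite sum_b2n. apply Nat.mul_le_mono_r. apply cntW_bound; auto.
Qed.

Lemma gr_bound h g r : 1 <= h -> 1 <= g -> 1 <= r ->
  Nat.le (cnt (Q8 h) (flat_map (fun e => flat_map (fun s =>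
  flat_map (fun cs => flat_map (fun o => flat_map (fun w =>
    map (fun t => (g,r,e,s,cs,o,w,t)) (zrange (8*h)))
    (zrange (2*h))) (range0 r)) [0;1]) [1;-1]) [1;-1])) (Bnat h g r).
Proof.
  intros Hh Hg Hr. unfold Bnat.
  rewrite cnt_flat_map.
  set (c := (Z.to_nat (BW h g r) * Z.to_nat (2*KT h g r + 1))%nat).
  assert (Ho : forall e s cs, (e = 1 \/ e = -1) ->
     (cnt (Q8 h) (flat_map (fun o => flat_map (fun w =>
        map (fun t => (g,r,e,s,cs,o,w,t)) (zrange (8*h))) (zrange (2*h))) (range0 r))
      <= Z.to_nat (r+1) * c)%nat).
  { intros e s cs He. rewrite cnt_flat_map.
    replace (Z.to_nat (r+1)) with (length (range0 r)) by (unfold range0; rewrite length_map, length_seq; lia).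
    apply list_sum_const. intros o _. apply inner_bound; auto. }
  eapply Nat.le_trans.
  { apply (list_sum_const _ (Nat.mul 2 (Nat.mul 2 (Nat.mul (Z.to_nat (r+1)%Z) c)))).
    intros e He. rewrite cnt_flat_map.
    apply (list_sum_const _ (Nat.mul 2 (Nat.mul (Z.to_nat (r+1)%Z) c))).
    intros s _. rewrite cnt_flat_map.
    apply (list_sum_const _ (Nat.mul (Z.to_nat (r+1)%Z) c)).
    intros cs _. apply Ho. simpl in He. lia. }
  simpl length. unfold c. lia.
Qed.

End Part7.

Section Part8.
Local Open Scope Z_scope.

Lemma sq_cancel X Y : 0 <= Y -> X*X <= Y*Y -> X <= Y.
Proof. intros HY H. destruct (Z.le_gt_cases X Y); auto. nia. Qed.

Lemma Bnat_bound h g r : 1 <= h -> 1 <= g -> 1 <= r ->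
  Z.of_nat (Bnat h g r) * (g * r) <= 75648 * (h*h).
Proof.
  intros Hh Hg Hr. unfold Bnat.
  assert (HL : 0 <= LW h g r) by apply Z.sqrt_nonneg.
  assert (HK : 0 <= KT h g r) by apply Z.sqrt_nonneg.
  set (s0 := g*r^2).
  assert (Hs0 : 1 <= s0) by (unfold s0; nia).
  unfold BW. fold s0.
  destruct (Z.leb_spec s0 (16*h*h)) as [Hle|Hgt]; [|change (Z.to_nat 0) with 0%nat; rewrite Nat.mul_0_r, Nat.mul_0_l, Nat2Z.inj_0, Z.mul_0_l; nia].
  set (L := LW h g r) in *. set (K := KT h g r) in *.
  assert (HLs : L*L*s0 <= 1152*h*h) by (unfold L, LW; fold s0; apply sqrt_div_spec; nia).
  assert (HKs : K*K*s0 <= 208*h*h) by (unfold K, KT; fold s0; apply sqrt_div_spec; nia).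
  set (hh := h*h).
  assert (Hhh : 1 <= hh) by (unfold hh; nia).
  assert (H1 : s0*L*K <= 490*hh).
  { apply sq_cancel; [lia|].
    replace (s0*L*K*(s0*L*K)) with ((L*L*s0)*(K*K*s0)) by ring.
    assert ((L*L*s0)*(K*K*s0) <= (1152*hh)*(208*hh)).
    { apply Z.mul_le_mono_nonneg; try nia. }
    nia. }
  assert (H2 : s0*L <= 136*hh).
  { apply sq_cancel; [lia|].
    replace (s0*L*(s0*L)) with (s0*(L*L*s0)) by ring.
    assert (s0*(L*L*s0) <= (16*hh)*(1152*hh)).
    { apply Z.mul_le_mono_nonneg; try nia. }
    nia. }
  assert (H3 : s0*K <= 58*hh).
  { apply sq_cancel; [lia|].
    replace (s0*K*(s0*K)) with (s0*(K*K*s0)) by ring.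
    assert (s0*(K*K*s0) <= (16*hh)*(208*hh)).
    { apply Z.mul_le_mono_nonneg; try nia. }
    nia. }
  assert (Hgr : g*r*(r+1) <= 2*s0) by (unfold s0; nia).
  rewrite !Nat2Z.inj_mul, !Z2Nat.id by lia.
  replace (Z.of_nat 8) with 8 by reflexivity.
  assert (HP : 0 <= (2*(2*L+1))*(2*K+1)) by nia.
  replace (8 * (r + 1) * (2 * (2 * L + 1)) * (2 * K + 1) * (g * r))
    with (8 * (g*r*(r+1)) * ((2 * (2 * L + 1)) * (2 * K + 1))) by ring.
  assert (8 * (g*r*(r+1)) * ((2 * (2 * L + 1)) * (2 * K + 1)) <= 8 * (2*s0) * ((2 * (2 * L + 1)) * (2 * K + 1))).
  { apply Z.mul_le_mono_nonneg_r; [lia|]. lia. }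
  assert (Hexp : 8 * (2*s0) * ((2 * (2 * L + 1)) * (2 * K + 1)) =
     32 * (4*(s0*L*K) + 2*(s0*L) + 2*(s0*K) + s0)) by ring.
  lia.
Qed.

End Part8.

Section Part9.
Local Open Scope R_scope.

Definition Rsum {A} (f : A -> R) (l : list A) : R := fold_right (fun x acc => f x + acc) 0 l.

Lemma INR_sum_le {A} (F : A -> nat) (G : A -> R) l :
  (forall x, In x l -> INR (F x) <= G x) -> INR (list_sum (map F l)) <= Rsum G l.
Proof.
  induction l; simpl; intros H; [lra|].
  rewrite plus_INR. pose proof (H a (or_introl eq_refl)).
  assert (INR (list_sum (map F l)) <= Rsum G l) by (apply IHl; auto). lra.
Qed.

Lemma Rsum_le {A} (F G : A -> R) l : (forall x, In x l -> F x <= G x) -> Rsum F l <= Rsum G l.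
Proof.
  induction l; simpl; intros H; [lra|].
  pose proof (H a (or_introl eq_refl)).
  assert (Rsum F l <= Rsum G l) by (apply IHl; auto). lra.
Qed.

Lemma Rsum_scal {A} c (f : A -> R) l : Rsum (fun x => c * f x) l = c * Rsum f l.
Proof. induction l; simpl; [ring|]. rewrite IHl. ring. Qed.

Lemma Rsum_app {A} (f : A -> R) l1 l2 : Rsum f (l1 ++ l2) = Rsum f l1 + Rsum f l2.
Proof. induction l1; simpl; [ring|]. rewrite IHl1. ring. Qed.

Lemma Rsum_nonneg {A} (f : A -> R) l : (forall x, In x l -> 0 <= f x) -> 0 <= Rsum f l.
Proof.
  induction l; simpl; intros H; [lra|].
  pose proof (H a (or_introl eq_refl)).
  assert (0 <= Rsum f l) by (apply IHl; auto). lra.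
Qed.

Lemma ln_le_mono x y : 0 < x -> x <= y -> ln x <= ln y.
Proof.
  intros Hx Hxy. destruct (Rle_lt_or_eq_dec _ _ Hxy) as [H|H].
  - left. apply ln_increasing; auto.
  - rewrite H. lra.
Qed.

Lemma harm_step x : 1 <= x -> 1 / (x + 1) <= ln (x + 1) - ln x.
Proof.
  intro Hx. set (y := 1 / (x+1)).
  assert (Hy : 1 - y = x / (x + 1)) by (unfold y; field; lra).
  pose proof (exp_ineq1_le (- y)) as He.
  assert (Hpos : 0 < x / (x+1)) by (apply Rdiv_lt_0_compat; lra).
  assert (H1 : ln (x / (x+1)) <= - y).
  { rewrite <- (ln_exp (-y)). apply ln_le_mono; auto. lra. }
  unfold Rdiv in H1. rewrite ln_mult, ln_Rinv in H1 by (try apply Rinv_0_lt_compat; lra).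
  lra.
Qed.

Lemma harmonic n : (1 <= n)%nat ->
  Rsum (fun z => 1 / IZR z) (map Z.of_nat (seq 1 n)) <= 1 + ln (INR n).
Proof.
  induction n as [|n IH]; intro Hn; [lia|].
  destruct (Nat.eq_dec n 0) as [->|Hn0].
  - simpl. rewrite ln_1. lra.
  - rewrite seq_S, map_app, Rsum_app.
    change (Rsum (fun z => 1/IZR z) (map Z.of_nat [(1+n)%nat])) with (1/IZR (Z.of_nat (1+n)) + 0).
    rewrite <- INR_IZR_INZ, S_INR.
    replace (INR (1 + n)) with (INR n + 1) by (rewrite plus_INR; simpl; ring).
    assert (Hn1 : 1 <= INR n) by (apply (le_INR 1); lia).
    pose proof (harm_step (INR n) Hn1) as Hs.
    assert (Hn2 : (1 <= n)%nat) by lia. specialize (IH Hn2). rewrite S_INR. lra.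
Qed.

Lemma ln4_ge1 : 1 <= ln 4.
Proof.
  replace 4 with (2 ^ 2) by ring. rewrite ln_pow by lra. simpl. pose proof ln_lt_2. lra.
Qed.

End Part9.

Section Part10.
Local Open Scope Z_scope.

Definition pZ (tp : Z*Z*Z*Z*Z) : bool :=
  let '(x,a,b,c,d) := tp in
  sol_eqn x a b c d && (Z.eqb (mm x a b) 0 && Z.eqb (nn x d) 0).

Definition RelZ (src : Z*Z*Z*Z*Z) (y : Z*Z) : Prop :=
  let '(x,a,b,c,d) := src in y = (x,a) /\ mm x a b = 0 /\ nn x d = 0 /\ kk x a c = 0.

Lemma cnt_or {A} (p q1 q2 : A -> bool) l :
  (forall x, p x = true -> q1 x = true \/ q2 x = true) -> (cnt p l <= cnt q1 l + cnt q2 l)%nat.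
Proof.
  unfold cnt. induction l; simpl; auto. intro H.
  specialize (IHl H). destruct (p a) eqn:E.
  - destruct (H a E) as [E1|E1]; rewrite E1; [destruct (q2 a)|destruct (q1 a)]; simpl; lia.
  - destruct (q1 a), (q2 a); simpl; lia.
Qed.

Lemma nodup_L5 h : NoDup (L5 h).
Proof. unfold L5. repeat apply nodup_prod; apply nodup_zrange. Qed.

Lemma zero_bound h : 1 <= h ->
  (cnt pZ (L5 h) <= Z.to_nat (4*h+1) * Z.to_nat (2*h+1))%nat.
Proof.
  intros Hh.
  eapply Nat.le_trans.
  - apply (cnt_inj pZ (fun _ => true) (L5 h) (list_prod (zrange (2*h)) (zrange h)) RelZ).
    + apply nodup_L5.
    + intros [[[[x a] b] c] d] Hin Hp. simpl in Hp.
      apply andb_true_iff in Hp. destruct Hp as [Hs Hz].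
      apply andb_true_iff in Hz. destruct Hz as [Hm Hn].
      apply Z.eqb_eq in Hm, Hn. apply sol_iff in Hs.
      apply in_L5 in Hin; [|lia].
      exists (x,a). split; [|split; auto].
      * apply in_prod_iff. split; apply in_zrange; lia.
      * simpl. repeat split; auto.
        unfold mm, nn, kk in *. rewrite Hm, Hn in Hs.
        assert (Hk : (a*x - 2*c)^2 = 0) by (rewrite Hs; ring).
        apply Z.pow_eq_0_iff in Hk. lia.
    + intros [[[[x a] b] c] d] [[[[x' a'] b'] c'] d'] y _ _ _ _.
      simpl. unfold mm, nn, kk.
      intros [-> [H1 [H2 H3]]] [E [H1' [H2' H3']]].
      injection E as E1 E2. subst. repeat f_equal; lia.
  - eapply Nat.le_trans; [apply cnt_le_length|].
    rewrite length_prod, !length_zrange.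
    replace (2*(2*h)+1) with (4*h+1) by ring. lia.
Qed.

Lemma main_bound h : 1 <= h ->
  (cnt pM (L5 h) <= list_sum (map (fun g => list_sum (map (fun r => Bnat h g r)
       (range1 (4*h)))) (range1 (16*h*h))))%nat.
Proof.
  intros Hh.
  eapply Nat.le_trans.
  - apply (cnt_inj pM (Q8 h) (L5 h) (L8 h) Rel).
    + apply nodup_L5.
    + intros x Hx Hp. apply main_exist; auto.
    + intros x x' y _ _ _ _ H1 H2. eapply Rel_unique; eauto.
  - unfold L8. rewrite cnt_flat_map. apply list_sum_le. intros g Hg.
    apply in_range1 in Hg.
    rewrite cnt_flat_map. apply list_sum_le. intros r Hr.
    apply in_range1 in Hr.
    apply gr_bound; lia.
Qed.

End Part10.

Section Part11.
Local Open Scope R_scope.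

Lemma Rsum_ext {A} (f g : A -> R) l : (forall x, f x = g x) -> Rsum f l = Rsum g l.
Proof. intro H. induction l; simpl; auto. rewrite H, IHl. auto. Qed.

Lemma per_term h g r : (1 <= h)%Z -> (1 <= g)%Z -> (1 <= r)%Z ->
  INR (Bnat h g r) <= 75648 * (IZR h * IZR h) * (1 / IZR g * (1 / IZR r)).
Proof.
  intros Hh Hg Hr.
  pose proof (Bnat_bound h g r Hh Hg Hr) as HB.
  apply IZR_le in HB. rewrite !mult_IZR in HB. rewrite <- INR_IZR_INZ in HB.
  apply IZR_le in Hg. apply IZR_le in Hr.
  set (X := INR (Bnat h g r)) in *.
  replace X with (X * (IZR g * IZR r) * (1 / IZR g * (1 / IZR r))) by (field; lra).
  apply Rmult_le_compat_r.
  - assert (0 < 1 / IZR g) by (apply Rdiv_lt_0_compat; lra).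
    assert (0 < 1 / IZR r) by (apply Rdiv_lt_0_compat; lra). nra.
  - lra.
Qed.

Lemma harm_range1 N : (1 <= N)%Z ->
  Rsum (fun z => 1 / IZR z) (range1 N) <= 1 + ln (IZR N).
Proof.
  intro HN. unfold range1.
  replace (IZR N) with (INR (Z.to_nat N)) by (rewrite INR_IZR_INZ, Z2Nat.id by lia; auto).
  apply harmonic. lia.
Qed.

Lemma Rsum_inv_nonneg N : 0 <= Rsum (fun z => 1 / IZR z) (range1 N).
Proof.
  apply Rsum_nonneg. intros z Hz. apply in_range1 in Hz.
  destruct Hz as [Hz _]. apply IZR_le in Hz. apply Rlt_le. apply Rdiv_lt_0_compat; lra.
Qed.

Lemma sq16 Y : 4 <= Y -> 16 * Y * Y <= Y ^ 4.
Proof. intros HX. assert (H16 : 16 <= Y*Y) by nra.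
  replace (Y^4) with ((Y*Y)*(Y*Y)) by ring. replace (16*Y*Y) with (16*(Y*Y)) by ring.
  apply Rmult_le_compat_r; lra. Qed.
Lemma sq4 Y : 4 <= Y -> 4 * Y <= Y ^ 2.
Proof. intros HX. replace (Y^2) with (Y*Y) by ring. apply Rmult_le_compat_r; lra. Qed.



End Part11.

Open Scope R_scope.

Theorem proposition3p1 :
  exists (C : R) (H0 : nat), forall H : nat, (H0 <= H)%nat ->
    INR (R_count H) <= C * (INR H)^2 * (ln (INR H))^2.
Proof.
  exists 2000000, 4%nat. intros H HH.
  set (h := Z.of_nat H).
  assert (Hh : (1 <= h)%Z) by (unfold h; lia).
  rewrite R_count_cnt. fold h.
  assert (Hsplit : (cnt p5 (L5 h) <= cnt pZ (L5 h) + cnt pM (L5 h))%nat).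
  { apply cnt_or. intros [[[[x a] b] c] d]. unfold p5, pZ, pM.
    destruct (sol_eqn x a b c d); simpl; [|discriminate].
    destruct (Z.eqb (mm x a b) 0 && Z.eqb (nn x d) 0); simpl; auto. }
  assert (HZ : (cnt pZ (L5 h) <= 15 * H * H)%nat).
  { eapply Nat.le_trans; [apply zero_bound; auto|].
    replace (Z.to_nat (4*h+1)) with (4*H+1)%nat by (unfold h; lia).
    replace (Z.to_nat (2*h+1)) with (2*H+1)%nat by (unfold h; lia).
    nia. }
  pose proof (main_bound h Hh) as HM.
  set (S := list_sum (map (fun g => list_sum (map (fun r => Bnat h g r)
       (range1 (4*h)))) (range1 (16*h*h)))) in *.
  set (X := INR H).
  assert (HX : 4 <= X).
  { assert (H4 : INR 4 <= INR H) by (apply le_INR; auto).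
    replace (INR 4) with 4 in H4 by (simpl; ring). auto. }
  assert (HhX : IZR h = X) by (unfold h, X; rewrite INR_IZR_INZ; auto).
  set (c := 75648 * (X * X)).
  set (Hg := Rsum (fun z => 1 / IZR z) (range1 (16*h*h))).
  set (Hr := Rsum (fun z => 1 / IZR z) (range1 (4*h))).
  assert (HS : INR S <= c * Hr * Hg).
  { unfold S.
    eapply Rle_trans.
    - apply (INR_sum_le _ (fun g => Rsum (fun r => c * (1 / IZR g * (1 / IZR r))) (range1 (4*h)))).
      intros g Hg'. apply in_range1 in Hg'.
      apply INR_sum_le. intros r Hr'. apply in_range1 in Hr'.
      unfold c. rewrite <- HhX. apply per_term; lia.
    - apply Req_le.
      rewrite (Rsum_ext _ (fun g => (c * Hr) * (1 / IZR g))).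
      + unfold Hg. rewrite Rsum_scal. ring.
      + intro g. unfold Hr.
        rewrite (Rsum_ext _ (fun r => (c * (1 / IZR g)) * (1 / IZR r))) by (intro; ring).
        rewrite Rsum_scal. ring. }
  assert (HL : 1 <= ln X).
  { eapply Rle_trans; [apply ln4_ge1|]. apply ln_le_mono; lra. }
  set (L := ln X) in *.
  assert (HHg : Hg <= 1 + 4 * L).
  { unfold Hg. eapply Rle_trans; [apply harm_range1; lia|].
    rewrite !mult_IZR, HhX.
    assert (ln (16 * X * X) <= ln (X ^ 4)).
    { apply ln_le_mono; [|apply sq16; auto]. clear - HX. nra. }
    rewrite ln_pow in H0 by lra. replace (INR 4) with 4 in H0 by (simpl; ring). fold L in H0. lra. }
  assert (HHr : Hr <= 1 + 2 * L).
  { unfold Hr. eapply Rle_trans; [apply harm_range1; lia|].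
    rewrite !mult_IZR, HhX.
    assert (ln (4 * X) <= ln (X ^ 2)) by (apply ln_le_mono; [lra|apply sq4; auto]).
    rewrite ln_pow in H0 by lra. replace (INR 2) with 2 in H0 by (simpl; ring). fold L in H0. lra. }
  assert (Hg0 : 0 <= Hg) by apply Rsum_inv_nonneg.
  assert (Hr0 : 0 <= Hr) by apply Rsum_inv_nonneg.
  assert (Htot : (cnt p5 (L5 h) <= 15 * H * H + S)%nat) by lia.
  apply le_INR in Htot. rewrite plus_INR, !mult_INR in Htot. fold X in Htot.
  replace (INR 15) with 15 in Htot by (simpl; ring).
  assert (HP : Hr * Hg <= (3 * L) * (5 * L)).
  { apply Rmult_le_compat; lra. }
  assert (HX2 : 0 <= X * X) by (clear - HX; nra).
  assert (HA : c * Hr * Hg <= 75648 * (X*X) * (15 * (L * L))).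
  { replace (c * Hr * Hg) with (75648 * (X*X) * (Hr * Hg)) by (unfold c; ring).
    apply Rmult_le_compat_l; [lra|]. lra. }
  assert (HLL : 1 <= L * L) by (replace 1 with (1*1) by ring; apply Rmult_le_compat; lra).
  assert (HB : 15 * X * X <= 15 * (X * X) * (L * L)).
  { replace (15 * X * X) with (15 * (X*X) * 1) by ring. apply Rmult_le_compat_l; lra. }
  assert (HPp : 0 <= X * X * (L * L)) by (apply Rmult_le_pos; lra).
  replace (X ^ 2) with (X * X) by ring. replace (L ^ 2) with (L * L) by ring.
  replace (75648 * (X*X) * (15 * (L * L))) with (1134720 * (X * X * (L * L))) in HA by ring.
  replace (15 * (X * X) * (L * L)) with (15 * (X * X * (L * L))) in HB by ring.
  replace (2000000 * (X * X) * (L * L)) with (2000000 * (X * X * (L * L))) by ring.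
  lra.
Qed.
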